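(* For every $n\ge1$ there is an injective map from $\bar{Q}_3(0,n)$ to $\bar{P}_3(0,n)$.
   Context: Partitions: $\lambda_1\ge\cdots\ge\lambda_\ell>0$, $\ell(\lambda)=\ell$, $\lambda_i=0$ for $i>\ell$, $s(\lambda)$ the smallest part with $s(\emptyset)=+\infty$. Rank $=\lambda_1-\ell$. Durfee symbol $(\alpha,\beta)_j$ of $\lambda$: $j$ is the largest integer with $\lambda_j\ge j$, $\alpha$ is the conjugate of $(\lambda_1-j,\dots,\lambda_j-j)$, $\beta=(\lambda_{j+1},\lambda_{j+2},\dots)$; $|\lambda|=|\alpha|+|\beta|+j^2$. $\bar{Q}_3(0,n)$ is the set of partitions of $n$ whose Durfee symbol $(\alpha,\beta)_j$ satisfies $j\ge1$, $\beta_1=j$, $\ell(\beta)-\ell(\alpha)\ge1$, $\alpha_1=\alpha_2=j$, $s(\alpha)=1$ and $s(\beta)=2$. $\bar{P}_3(0,n)$ is the set of partitions of $n$ with rank $\ge0$ whose Durfee symbol $(\gamma,\delta)_{j'}$ satisfies $j'\ge1$, $\ell(\gamma)=\ell(\delta)$, $\gamma_1\le j'-2$, $\delta_1=j'$ and $s(\delta)=1$. *)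

(* Defs.v *)
(* Partitions are represented as sequences of nat
   [:: lambda_1; ...; lambda_l] (weakly decreasing, positive entries). *)
From mathcomp Require Import all_boot all_order all_algebra.
Set Implicit Arguments. Unset Strict Implicit. Unset Printing Implicit Defensive.
Import GRing.Theory Num.Theory.

Definition is_partition_of (n : nat) (la : seq nat) : bool :=
  [&& sorted geq la, all (fun x => 0 < x) la & sumn la == n].

(* 1-indexed part lambda_i, with lambda_i = 0 for i > l(lambda) (and i = 0) *)
Definition part (la : seq nat) (i : nat) : nat := nth 0 la i.-1.

Definition rank (la : seq nat) : int := ((part la 1)%:Z - (size la)%:Z)%R.

(* smallest part; None encodes +infinity (empty partition) *)
Definition smallest (la : seq nat) : option nat :=
  if la is x :: s then Some (foldr minn x s) else None.

Definition conjugate (mu : seq nat) : seq nat :=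
  mkseq (fun i => count (fun x => i < x) mu) (part mu 1).

Definition durfee_j (la : seq nat) : nat :=
  \max_(i < size la | i.+1 <= part la i.+1) i.+1.

Definition durfee_alpha (la : seq nat) : seq nat :=
  let j := durfee_j la in conjugate [seq x - j | x <- take j la].
Definition durfee_beta (la : seq nat) : seq nat := drop (durfee_j la) la.

Definition Qbar3 (n : nat) : pred (seq nat) := fun la =>
  let j := durfee_j la in
  let al := durfee_alpha la in
  let be := durfee_beta la in
  [&& is_partition_of n la, 1 <= j, part be 1 == j,
      ((size al)%:Z + 1 <= (size be)%:Z)%R,
      part al 1 == j, part al 2 == j,
      smallest al == Some 1 & smallest be == Some 2].

Definition Pbar3 (n : nat) : pred (seq nat) := fun la =>
  let j' := durfee_j la in
  let ga := durfee_alpha la in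
  let de := durfee_beta la in
  [&& is_partition_of n la, (0 <= rank la)%R, 1 <= j', size ga == size de,
      ((part ga 1)%:Z <= (j')%:Z - 2)%R,
      part de 1 == j' & smallest de == Some 1].

(* Main.v *)
Require Import Defs.
From mathcomp Require Import all_boot all_order all_algebra zify.
Set Implicit Arguments. Unset Strict Implicit. Unset Printing Implicit Defensive.

Definition cgt (i : nat) (s : seq nat) := count (fun y => i < y) s.

Lemma geq_tr : transitive geq.
Proof. move=> a b c; rewrite /geq /=; lia. Qed.

Lemma geq_anti : antisymmetric geq.
Proof. move=> a b; rewrite /geq /=; lia. Qed.

Lemma sumn_mkseq f N : sumn (mkseq f N) = \sum_(i < N) f i.
Proof.
by rewrite sumnE /mkseq big_map -(big_mkord xpredT) /index_iota subn0.
Qed.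

Lemma sum_ind_min y M : \sum_(i < M) (i < y : nat) = minn y M.
Proof.
elim: M => [|M IH]; first by rewrite big_ord0 minn0.
rewrite big_ord_recr /= IH; case: (ltnP M y) => H /=; lia.
Qed.

Lemma sumn_cgt s M : all (fun y => y <= M) s -> \sum_(i < M) cgt i s = sumn s.
Proof.
elim: s => [|y s IH] /=; first by rewrite big1.
move=> /andP [Hy Hs]; rewrite -IH // /cgt.
under eq_bigr => i _ do rewrite /= .
rewrite big_split /= sum_ind_min; lia.
Qed.

Lemma count_mem_cgt k s : 0 < k -> count_mem k s + cgt k s = cgt k.-1 s.
Proof.
move=> Hk; elim: s => [|y s IH] //=.
rewrite /cgt /= in IH *; case: (ltngtP y k) => H /=; lia.
Qed.

Lemma cgt_inj s1 s2 : sorted geq s1 -> sorted geq s2 ->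
  all (fun y => 0 < y) s1 -> all (fun y => 0 < y) s2 ->
  (forall i, cgt i s1 = cgt i s2) -> s1 = s2.
Proof.
move=> S1 S2 P1 P2 H; apply: (sorted_eq geq_tr geq_anti S1 S2).
rewrite /perm_eq; apply/allP => y _ /=; apply/eqP.
case: y => [|k].
  have E s : all (fun y => 0 < y) s -> count_mem 0 s = 0.
    by move=> Hs; apply/eqP; rewrite -leqn0 leqNgt -has_count; apply/hasPn => z /(allP Hs); case: z.
  by rewrite !E.
have := count_mem_cgt s1 (ltn0Sn k); have := count_mem_cgt s2 (ltn0Sn k).
rewrite !H /=; lia.
Qed.
Lemma foldr_min_le a t y : y \in a :: t -> foldr minn a t <= y.
Proof.
elim: t => [|z t IH] /=; first by rewrite inE => /eqP ->.
rewrite !inE => /or3P [/eqP Ey|/eqP Ey|H]; rewrite ?Ey.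
- by move: IH; rewrite Ey inE eqxx => /(_ isT); lia.
- lia.
- have := IH; rewrite inE H orbT => /(_ isT); lia.
Qed.

Lemma foldr_min_mem a t : foldr minn a t \in a :: t.
Proof.
elim: t => [|z t IH] /=; first by rewrite inE.
rewrite /minn; case: ifP => _; rewrite !inE ?eqxx ?orbT //.
by move: IH; rewrite inE => /orP [->|->]; rewrite ?orbT.
Qed.

Lemma smallestP s k : smallest s = Some k <-> (k \in s /\ all (fun y => k <= y) s).
Proof.
case: s => [|a t]; rewrite /smallest; first by split => [//|[]].
split.
  move=> [<-]; split; first exact: foldr_min_mem.
  by apply/allP => y; exact: foldr_min_le.
move=> [Hk Ha]; congr Some; apply/eqP; rewrite eqn_leq foldr_min_le //=.
by move/allP: Ha => /(_ _ (foldr_min_mem a t)).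
Qed.

Lemma durfee_eq s k : k <= size s ->
  (forall i, i < size s -> (i.+1 <= nth 0 s i) = (i < k)) -> durfee_j s = k.
Proof.
move=> Hk H; apply/eqP; rewrite eqn_leq; apply/andP; split.
  apply/bigmax_leqP => i; rewrite /part /= H //.
case: k Hk H => [//|k] Hk H.
have Hi : k < size s by [].
have := @leq_bigmax_cond _ (fun i : 'I_(size s) => i.+1 <= part s i.+1) (fun i => i.+1) (Ordinal Hi).
by rewrite /part /= H //= ltnSn => /(_ isT).
Qed.

Lemma durfee_le s : durfee_j s <= size s.
Proof. by apply/bigmax_leqP => i _. Qed.

Record Qdata n la j x be : Prop := QD {
 qd_sum : sumn la = n;
 qd_la : la = [seq y + j | y <- x] ++ be;
 qd_j : 2 <= j;
 qd_sx : size x = j;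
 qd_xs : sorted geq x;
 qd_x1 : all (fun y => 1 < y) x;
 qd_x12 : nth 0 x 1 < head 0 x;
 qd_bs : sorted geq be;
 qd_b2 : all (fun y => 1 < y) be;
 qd_bh : head 0 be = j;
 qd_bj : all (fun y => y <= j) be;
 qd_len : (head 0 x).+1 <= size be }.

Lemma mem_mkseqP (f : nat -> nat) N v : v \in mkseq f N -> exists2 i, i < N & f i = v.
Proof. by move=> /mapP [i]; rewrite mem_iota add0n => /andP [_ Hi] ->; exists i. Qed.

Lemma Qextract n la : la \in Qbar3 n ->
  Qdata n la (durfee_j la) [seq y - durfee_j la | y <- take (durfee_j la) la] (drop (durfee_j la) la).
Proof.
rewrite unfold_in /Qbar3 /durfee_alpha /durfee_beta /=.
have Hjl := durfee_le la.
set j := durfee_j la in Hjl *.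
set x := [seq y - j | y <- take j la].
set be := drop j la.
move=> /andP [Hp /andP [Hj0 /andP [Hbh /andP [Hlen /andP [Ha1 /andP [Ha2 /andP [/eqP Has /eqP Hbs]]]]]]].
move: Hp => /and3P [Hsort Hpos /eqP Hsum].
have Hsx : size x = j by rewrite size_map size_takel.
have Hxs : sorted geq x.
  rewrite sorted_map; apply: (sub_sorted _ (take_sorted j Hsort)).
  move=> a b /=; rewrite /geq /=; lia.
move/smallestP: Hbs => [Hb2m Hb2].
have Hbs : sorted geq be by exact: drop_sorted.
have Hbhd : head 0 be = j by move: Hbh; rewrite /part /= => /eqP; case: (be).
have Hj2 : 2 <= j.
  by rewrite -Hbhd; case: (be) Hb2m Hb2 => [//|b s] _ /= /andP [].
have Hbj : all (fun y => y <= j) be.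
  case: (be) Hbs Hbhd => [//|b s] /= Hp <-; apply/andP; split => //.
  by apply: (sub_all _ (order_path_min geq_tr Hp)).
have Hx1 : all (fun y => 1 < y) x.
  move: Ha2; rewrite /part /conjugate /=.
  case: (ltnP 1 (nth 0 x 0)) => H.
    by rewrite nth_mkseq // all_count Hsx.
  by rewrite nth_default ?size_mkseq //; move/eqP => E; rewrite -E in Hj0.
have Hx12 : nth 0 x 1 < head 0 x.
  move/smallestP: Has => [/mem_mkseqP [i Hi Hc] _].
  move: Hi Hc; rewrite /part /=.
  case: (x) Hsx Hj2 => [|x1 [|x2 r]] /=; try lia.
have Hl : (head 0 x).+1 <= size be.
  move: Hlen; rewrite /conjugate size_mkseq /part /= -nth0 => H.
  lia.
constructor => //.
rewrite -[LHS](cat_take_drop j); congr (_ ++ _).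
rewrite -map_comp map_id_in // => y Hy /=.
have : y - j \in x by apply: map_f.
move/(allP Hx1) => /=; lia.
Qed.

Definition dpQ (m : nat) (x : seq nat) : seq nat :=
  m.-1 :: (head 0 x - 2) :: [seq y - 1 | y <- behead x].

Definition hQ (j : nat) (be dp : seq nat) (i : nat) : nat :=
  if i <= j then j + maxn (cgt i.+1 be) 1 else cgt (i - j.+1) dp.

Definition FQ (j : nat) (x be : seq nat) : seq nat :=
  mkseq (hQ j be (dpQ (size be) x)) (j.+1 + (size be).-1).

Definition fQ (la : seq nat) : seq nat :=
  FQ (durfee_j la) [seq y - durfee_j la | y <- take (durfee_j la) la] (drop (durfee_j la) la).

Lemma sumn_sub1 s : all (fun y => 0 < y) s -> sumn [seq y - 1 | y <- s] + size s = sumn s.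
Proof. elim: s => [|y s IH] //= /andP [H1 H2]; have := IH H2; lia. Qed.

Lemma sumn_addj s j : sumn [seq y + j | y <- s] = sumn s + j * size s.
Proof. elim: s => [|y s IH] /=; [lia | rewrite IH; nia]. Qed.

Lemma dp_facts n la j x be : Qdata n la j x be ->
  let m := size be in let dp := dpQ m x in
  [/\ size dp = j.+1, sorted geq dp, all (fun y => 0 < y) dp,
      all (fun y => y <= m.-1) dp & 
      [/\ head 0 dp = m.-1, all (fun y => y <= m.-2) (behead dp) &
          sumn dp + j + 1 = m.-1 + sumn x]].
Proof.
case=> _ _ Hj Hsx Hxs Hx1 Hx12 _ _ _ _ Hlen; rewrite /dpQ /=.
case: x Hsx Hxs Hx1 Hx12 Hlen => [|x1 [|x2 r]] /= Hsx; try lia.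
move=> /andP [H12 Hp] /and3P [Hx1 Hx2 Hr] H12' Hlen.
have Hall : all (fun y => y <= x2) r by apply: (sub_all _ (order_path_min geq_tr Hp)).
have Hsr : sorted geq (x2 :: r) by [].
split.
- by rewrite size_map; lia.
- rewrite /= -/(sorted _ (_ :: _)); apply/andP; split; first (rewrite /geq /=; lia).
  apply/andP; split; first (rewrite /geq /=; lia).
  have -> : (x2 - 1) :: [seq y - 1 | y <- r] = [seq y - 1 | y <- x2 :: r] by [].
  rewrite sorted_map; apply: (sub_sorted _ Hsr) => a b; rewrite /geq /=; lia.
- apply/and4P; split; try lia.
  by apply/allP => y /mapP [z /(allP Hr) Hz ->]; lia.
- apply/and4P; split; try lia.
  by apply/allP => y /mapP [z /(allP Hall) Hz ->]; lia.
- split => //.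
    apply/and3P; split; try lia.
    by apply/allP => y /mapP [z /(allP Hall) Hz ->]; lia.
  have Hpos : all (fun y => 0 < y) (x2 :: r).
    by apply/allP => y; rewrite inE => /orP [/eqP ->|/(allP Hr)] /=; lia.
  have := sumn_sub1 Hpos.
  rewrite /= in Hsx *; move: (size be).-1 (sumn [seq y - 1 | y <- r]) => M S; lia.
Qed.

Lemma be_facts n la j x be : Qdata n la j x be ->
  [/\ cgt 0 be = size be, cgt 1 be = size be, (forall i, i < j -> 0 < cgt i be),
      (forall i, j <= i -> cgt i be = 0) & sumn be = \sum_(i < j) cgt i be].
Proof.
case=> _ _ Hj _ _ _ _ Hbs Hb2 Hbh Hbj _.
have Hc i : i < 2 -> cgt i be = size be.
  move=> Hi; apply/eqP; rewrite /cgt -all_count; apply: (sub_all _ Hb2) => y /=; lia.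
split; [exact: Hc|exact: Hc| | |by rewrite sumn_cgt].
- move=> i Hi; rewrite /cgt -has_count; case: (be) Hbh => [|b s] /= Hb; first lia.
  by rewrite Hb Hi.
- move=> i Hi; apply/eqP; rewrite /cgt -leqn0 leqNgt -has_count; apply/hasPn => y /(allP Hbj) /=; lia.
Qed.

Lemma size_FQ j x be : size (FQ j x be) = j.+1 + (size be).-1.
Proof. by rewrite size_mkseq. Qed.

Lemma nth_FQ j x be i : i < j.+1 + (size be).-1 ->
  nth 0 (FQ j x be) i = hQ j be (dpQ (size be) x) i.
Proof. by move=> Hi; rewrite nth_mkseq. Qed.

Lemma durfee_FQ n la j x be : Qdata n la j x be -> durfee_j (FQ j x be) = j.+1.
Proof.
move=> Hq; have [Hsd _ _ _ _] := dp_facts Hq.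
apply: durfee_eq; rewrite size_FQ; first lia.
move=> i Hi; rewrite nth_FQ // /hQ.
case: (leqP i j) => Hij.
  rewrite ltnS Hij; have := leq_maxr (cgt i.+1 be) 1; move: (maxn _ _) => M; lia.
have := count_size (fun y => i - j.+1 < y) (dpQ (size be) x).
rewrite Hsd -/(cgt _ _) ltnS (leqNgt i j) Hij /=; move: (cgt _ _) => M H; apply/negbTE; lia.
Qed.

Lemma alpha_FQ j x be :
  [seq y - j.+1 | y <- take j.+1 (FQ j x be)] = mkseq (fun i => (maxn (cgt i.+1 be) 1).-1) j.+1.
Proof.
apply: (eq_from_nth (x0 := 0)).
  by rewrite size_map size_takel ?size_mkseq // ?size_FQ; lia.
have Hs : j.+1 <= size (FQ j x be) by rewrite size_FQ; lia.
move=> i; rewrite size_map size_takel // => Hi.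
rewrite (nth_map 0) ?size_takel // nth_take // nth_FQ; last lia.
rewrite nth_mkseq // /hQ; have -> : i <= j by lia.
by move: (maxn _ _) => M; lia.
Qed.

Lemma beta_FQ j x be :
  drop j.+1 (FQ j x be) = mkseq (fun k => cgt k (dpQ (size be) x)) (size be).-1.
Proof.
apply: (eq_from_nth (x0 := 0)).
  by rewrite size_drop size_FQ size_mkseq; lia.
move=> i; rewrite size_drop size_FQ => Hi.
rewrite nth_drop nth_FQ; last lia.
rewrite nth_mkseq; last lia.
rewrite /hQ; have -> : (j.+1 + i <= j) = false by lia.
by congr cgt; lia.
Qed.

Lemma cgt_mono i k s : i <= k -> cgt k s <= cgt i s.
Proof. by move=> H; apply: sub_count => y /=; lia. Qed.

Lemma cgt_head k s : k < head 0 s -> 0 < cgt k s.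
Proof. by case: s => [|y s] //= ->. Qed.

Lemma mkseq_split3 (g : nat -> nat) k :
  mkseq g k.+3 = mkseq g k.+1 ++ [:: g k.+1; g k.+2].
Proof. by rewrite /mkseq -addn2 iotaD map_cat /= add0n. Qed.

Lemma sum_maxn (be : seq nat) k : (forall i, i < k.+2 -> 0 < cgt i be) ->
  (forall i, k.+2 <= i -> cgt i be = 0) ->
  \sum_(i < k.+3) maxn (cgt i.+1 be) 1 = 2 + \sum_(i < k.+1) cgt i.+1 be.
Proof.
move=> Hp H0.
rewrite (big_ord_recr k.+2) (big_ord_recr k.+1) /=.
rewrite (H0 k.+2) // (H0 k.+3) //.
rewrite -addnA addnC; congr (_ + _).
apply: eq_bigr => i _; apply/maxn_idPl; apply: Hp; have := ltn_ord i; lia.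
Qed.

Lemma FQ_P n la j x be : Qdata n la j x be -> FQ j x be \in Pbar3 n.
Proof.
move=> Hq.
have [Hsd Hdps Hdpp Hdpm [Hdph Hdpb Hdpsum]] := dp_facts Hq.
have [Hc0 Hc1 Hcpos Hc0j Hsbe] := be_facts Hq.
have Hq' := Hq; case: Hq' => Hsum Hla Hj Hsx Hxs Hx1 Hx12 Hbs Hb2 Hbh Hbj Hlen.
have Hx3 : 2 < head 0 x.
  have : nth 0 x 1 \in x by rewrite mem_nth // Hsx.
  by move/(allP Hx1) => /= H; lia.
rewrite unfold_in /Pbar3 /durfee_alpha /durfee_beta (durfee_FQ Hq) alpha_FQ beta_FQ /FQ.
move: (dpQ (size be) x) Hsd Hdps Hdpp Hdpm Hdph Hdpb Hdpsum => dp Hsd Hdps Hdpp Hdpm Hdph Hdpb Hdpsum.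
have Hm : 3 < size be by lia.
move: Hsbe Hc0 Hc1 Hcpos Hc0j Hdpm Hdph Hdpb Hdpsum Hlen Hm.
move Em: (size be) => m Hsbe Hc0 Hc1 Hcpos Hc0j Hdpm Hdph Hdpb Hdpsum Hlen Hm.
have Hdpk k : k < m.-1 -> 0 < cgt k dp by move=> Hk; apply: cgt_head; rewrite Hdph.
have Hdp1 : cgt m.-2 dp = 1.
  case: (dp) Hdph Hdpb => [|d0 dr] /= Hd0 Hdr; first lia.
  rewrite /cgt /= -/(cgt _ _) Hd0; have -> : m.-2 < m.-1 by lia.
  suff : cgt m.-2 dr = 0 by move=> ->.
  apply/eqP; rewrite /cgt -leqn0 leqNgt -has_count; apply/hasPn => y /(allP Hdr) /=; lia.
have Hdps0 : cgt 0 dp = j.+1 by rewrite -Hsd; apply/eqP; rewrite /cgt -all_count.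
have Hgp0 : (maxn (cgt 1 be) 1).-1 = m.-1 by rewrite Hc1; lia.
apply/andP; split.
rewrite /is_partition_of; apply/and3P; split.
- apply/(sortedP 0) => i; rewrite size_mkseq => Hi; rewrite !nth_mkseq; try lia.
  rewrite /hQ /geq /=.
  case: (ltnP i j) => Hij.
    repeat (rewrite ifT; last lia).
    have := cgt_mono be (leqnSn i.+1); move: (cgt i.+1 be) (cgt i.+2 be) => A B H; lia.
  case: (ltnP j i) => Hij'.
    repeat (rewrite ifF; last lia).
    have -> : i.+1 - j.+1 = (i - j.+1).+1 by lia.
    exact: cgt_mono.
  have Eij : i = j by lia.
  subst i; rewrite subnn Hdps0; have := leq_maxr (cgt j.+1 be) 1; move: (maxn _ _) => M; lia.
- apply/allP => y /mem_mkseqP [i Hi <-]; rewrite /hQ.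
  case: (leqP i j) => Hij.
    move: (maxn _ _) => M; lia.
  rewrite /=.
  apply: Hdpk; lia.
- apply/eqP; rewrite sumn_mkseq.
  have -> : \sum_(i < j.+1 + m.-1) hQ j be dp i = \sum_(i < j.+1) hQ j be dp (lshift m.-1 i) + \sum_(i < m.-1) hQ j be dp (rshift j.+1 i).
    by rewrite big_split_ord.
  have E1 : \sum_(i < j.+1) hQ j be dp (lshift m.-1 i) = \sum_(i < j.+1) (j + maxn (cgt i.+1 be) 1).
    by apply: eq_bigr => i _; rewrite /hQ /= -ltnS ltn_ord.
  have E2 : \sum_(i < m.-1) hQ j be dp (rshift j.+1 i) = \sum_(i < m.-1) cgt i dp.
    apply: eq_bigr => i _; rewrite /hQ /= ifF; last lia.
    by rewrite addKn.
  have E3 : \sum_(i < m.-1) cgt i dp = sumn dp by apply: sumn_cgt.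
  have [k Ek] : exists k, j = k.+2 by exists j.-2; lia.
  have E4 : \sum_(i < j.+1) (j + maxn (cgt i.+1 be) 1) =
            j.+1 * j + (2 + \sum_(i < k.+1) cgt i.+1 be).
    rewrite big_split /= sum_nat_const card_ord; congr (_ + _).
    rewrite Ek; apply: sum_maxn; rewrite -Ek //.
  have E5 : sumn be = m + \sum_(i < k.+1) cgt i.+1 be.
    by rewrite Hsbe Ek big_ord_recl Hc0.
  have E6 : n = sumn x + j * j + sumn be.
    by rewrite -Hsum Hla sumn_cat sumn_addj Hsx.
  rewrite E1 E2 E3 E4 E6 E5 mulSn.
  move: (\sum_(i < k.+1) cgt i.+1 be) (j * j) => S JJ.
  clear -Hdpsum Hm; lia.
apply/andP; split.
  rewrite /rank /part nth_mkseq ?size_mkseq // /hQ /= Hc1; lia.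
apply/andP; split; first by [].
apply/andP; split.
  by rewrite /conjugate !size_mkseq /part nth_mkseq //= Hgp0.
apply/andP; split.
  have Hgp : cgt 0 (mkseq (fun i => (maxn (cgt i.+1 be) 1).-1) j.+1) <= j.-1.
    have [k Ek] : exists k, j = k.+2 by exists j.-2; lia.
    rewrite Ek in Hc0j *.
    rewrite mkseq_split3.
    have -> : forall s1 s2, cgt 0 (s1 ++ s2) = cgt 0 s1 + cgt 0 s2 by move=> *; exact: count_cat.
    rewrite (Hc0j k.+2) // (Hc0j k.+3) //.
    have -> : cgt 0 [:: (maxn 0 1).-1; (maxn 0 1).-1] = 0 by [].
    have := count_size (fun y => 0 < y) (mkseq (fun i => (maxn (cgt i.+1 be) 1).-1) k.+1).
    rewrite size_mkseq -/(cgt _ _); move: (cgt 0 _) => C H; lia.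
  rewrite /conjugate /part nth_mkseq; last by rewrite nth_mkseq //= Hgp0; lia.
  move: Hgp; rewrite /cgt; move: (count _ _) => C H; lia.
apply/andP; split.
  by rewrite /part nth_mkseq ?Hdps0 //=; lia.
apply/eqP/smallestP; split.
  rewrite -Hdp1; apply: map_f; rewrite mem_iota; lia.
by apply/allP => y /mem_mkseqP [k Hk <-]; apply: Hdpk.
Qed.

Lemma Qdata_m n la j x be : Qdata n la j x be -> 3 < size be /\ 2 < head 0 x.
Proof.
case=> _ _ Hj Hsx _ Hx1 Hx12 _ _ _ _ Hlen.
have : nth 0 x 1 \in x by rewrite mem_nth // Hsx.
by move/(allP Hx1) => /= H; lia.
Qed.

Lemma map_sub1_inj t1 t2 : all (fun y => 0 < y) t1 -> all (fun y => 0 < y) t2 ->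
  [seq y - 1 | y <- t1] = [seq y - 1 | y <- t2] -> t1 = t2.
Proof.
elim: t1 t2 => [|a t1 IH] [|b t2] //= /andP [Ha H1] /andP [Hb H2] [Eab E].
by rewrite (IH _ H1 H2 E); congr (_ :: _); lia.
Qed.

Lemma FQ_inj n la1 la2 j1 x1 be1 j2 x2 be2 :
  Qdata n la1 j1 x1 be1 -> Qdata n la2 j2 x2 be2 ->
  FQ j1 x1 be1 = FQ j2 x2 be2 -> la1 = la2.
Proof.
move=> Q1 Q2 E.
have Ej : j1 = j2.
  by have := durfee_FQ Q1; rewrite E (durfee_FQ Q2) => [[]].
subst j2; set j := j1.
have [Hm1 Hh1] := Qdata_m Q1; have [Hm2 Hh2] := Qdata_m Q2.
have Em : size be1 = size be2.
  by have := size_FQ j x1 be1; rewrite E size_FQ; lia.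
have Hn i : i < j.+1 + (size be1).-1 ->
    hQ j be1 (dpQ (size be1) x1) i = hQ j be2 (dpQ (size be2) x2) i.
  move=> Hi; rewrite -nth_FQ // E nth_FQ //; lia.
have [Hc01 Hc11 Hcp1 Hcz1 _] := be_facts Q1.
have [Hc02 Hc12 Hcp2 Hcz2 _] := be_facts Q2.
have Ebe : be1 = be2.
  case: Q1 => _ _ Hj _ _ _ _ Hbs1 Hb21 _ _ _; case: Q2 => _ _ _ _ _ _ _ Hbs2 Hb22 _ _ _.
  apply: cgt_inj => //; try (apply: (sub_all _ Hb21) || apply: (sub_all _ Hb22); move=> y /=; lia).
  move=> i; case: (ltnP i 2) => Hi2.
    by case: i Hi2 => [|[|]] //= _; rewrite ?Hc01 ?Hc02 ?Hc11 ?Hc12.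
  case: (ltnP i j) => Hij; last by rewrite Hcz1 // Hcz2.
  have := Hn i.-1; rewrite /hQ; have -> : i.-1 <= j by lia.
  have -> : i.-1.+1 = i by lia.
  move=> /(_ ltac:(lia)) H.
  have P1 := Hcp1 i Hij; have P2 := Hcp2 i Hij.
  move: H; rewrite (maxn_idPl P1) (maxn_idPl P2); lia.
subst be2.
have [Hsd1 Hdps1 Hdpp1 Hdpm1 [Hdph1 _ _]] := dp_facts Q1.
have [Hsd2 Hdps2 Hdpp2 Hdpm2 [Hdph2 _ _]] := dp_facts Q2.
have Edp : dpQ (size be1) x1 = dpQ (size be1) x2.
  apply: cgt_inj => // k.
  case: (ltnP k (size be1).-1) => Hk.
    have := Hn (j.+1 + k); rewrite /hQ; have -> : (j.+1 + k <= j) = false by lia.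
    by rewrite addKn => ->; lia.
  have Z s : all (fun y => y <= (size be1).-1) s -> cgt k s = 0.
    move=> Hs; apply/eqP; rewrite /cgt -leqn0 leqNgt -has_count; apply/hasPn => y /(allP Hs) /=; lia.
  by rewrite !Z.
case: Q1 => _ Hla1 _ Hsx1 _ Hx11 _ _ _ _ _ _; case: Q2 => _ Hla2 _ Hsx2 _ Hx12 _ _ _ _ _ _.
rewrite Hla1 Hla2; congr (_ ++ _); congr map.
clear -Hsx1 Hsx2 Hx11 Hx12 Hh1 Hh2 Edp.
move: Edp; rewrite /dpQ => [[Eh Et]].
case: x1 x2 Hsx1 Hsx2 Hx11 Hx12 Hh1 Hh2 Eh Et => [|a1 t1] [|a2 t2] //= _ _ /andP [_ P1] /andP [_ P2] Ha1 Ha2 Eh Et.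
congr (_ :: _); first lia.
apply: map_sub1_inj => //.
  by apply: (sub_all _ P1) => y /=; lia.
by apply: (sub_all _ P2) => y /=; lia.
Qed.

Theorem lemma5p3 (n : nat) (hn : 1 <= n) :
  exists f : seq nat -> seq nat,
    (forall la, la \in Qbar3 n -> f la \in Pbar3 n) /\ {in Qbar3 n &, injective f}.
Proof.
exists fQ; split.
  by move=> la /Qextract Hq; exact: FQ_P Hq.
by move=> la1 la2 /Qextract Q1 /Qextract Q2 E; exact: FQ_inj Q1 Q2 E.
Qed.
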